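(* Let $\mathcal{S}\subset\mathbb{R}_{\ge0}$ be measurable with positive Lebesgue measure, $G$ a probability distribution on $\mathbb{R}$, and $T(G)=\int\nu\,dG/\int\delta\,dG$ a ratio functional. Let $\mathcal{I}=\mathcal{I}(|Z_1|,\dots,|Z_n|)$ be any random interval that is a function of nonnegative observations $|Z_1|,\dots,|Z_n|$. Then $$\mathbb{P}^A_G\big[T(G)\in\mathcal{I}\big]=\mathbb{P}^B_{\mathrm{Tilt}[G]}\big[\mathrm{Tilt}[T](\mathrm{Tilt}[G])\in\mathcal{I}\big],$$ where under $\mathbb{P}^A_G$ the $|Z_1|,\dots,|Z_n|$ are independently generated from the end-truncation model with prior $G$, and under $\mathbb{P}^B_{\mathrm{Tilt}[G]}$ they are independently generated from the per-unit truncation model with prior $\mathrm{Tilt}[G]$.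
   Context: $\varphi(z;\mu)$ is the $\mathrm{N}(\mu,1)$ density, $\varphi^{\mathrm{fold}}(z;\mu)=\varphi(z;\mu)+\varphi(-z;\mu)$ and $\Phi(\mathcal{S};\mu)=\int_{\mathcal{S}}\varphi^{\mathrm{fold}}(z;\mu)dz$. End-truncation model with prior $G$: $\mu\sim G$, $|Z|\mid\mu\sim|\mathrm{N}(\mu,1)|$ (folded normal), and $|Z|$ is observed only if $|Z|\in\mathcal{S}$ (each observation is a draw of $|Z|$ conditional on $|Z|\in\mathcal{S}$). Per-unit truncation model with prior $H$: $\mu\sim H$ and $|Z|\mid\mu$ has density $\varphi^{\mathrm{fold}}(z;\mu)\mathbf{1}(z\in\mathcal{S})/\Phi(\mathcal{S};\mu)$. Tilting: $\mathrm{Tilt}[G](d\mu)=\Phi(\mathcal{S};\mu)G(d\mu)/\int\Phi(\mathcal{S};\mu')G(d\mu')$, and for $T(G)=\int\nu\,dG/\int\delta\,dG$, $\mathrm{Tilt}[T](\tilde G)=\int\nu(\mu)\Phi(\mathcal{S};\mu)^{-1}\tilde G(d\mu)/\int\delta(\mu)\Phi(\mathcal{S};\mu)^{-1}\tilde G(d\mu)$ (integrals assumed well defined). *)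

(* Defs.v *)
From HB Require Import structures.
From mathcomp Require Import all_boot all_order all_algebra.
From mathcomp Require Import all_classical all_reals all_analysis.
Set Implicit Arguments. Unset Strict Implicit. Unset Printing Implicit Defensive.
Import Order.TTheory GRing.Theory Num.Theory.
Local Open Scope classical_set_scope.
Local Open Scope ring_scope.

Section Defs.
Variable R : realType.

Definition phi (mu z : R) : R := normal_pdf mu 1 z.

Definition phi_fold (mu z : R) : R := phi mu z + phi mu (- z).

Definition PhiS (S : set R) (mu : R) : \bar R :=
  (\int[@lebesgue_measure R]_(z in S) (phi_fold mu z)%:E)%E.

Definition ratioT (G : probability R R) (nu delta : R -> R) : R :=
  fine (\int[G]_x (nu x)%:E)%E / fine (\int[G]_x (delta x)%:E)%E.

Definition tiltT (S : set R) (H : probability R R) (nu delta : R -> R) : R :=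
  fine (\int[H]_x (nu x / fine (PhiS S x))%:E)%E /
  fine (\int[H]_x (delta x / fine (PhiS S x))%:E)%E.

Definition is_tilt (S : set R) (G H : probability R R) : Prop :=
  forall A : set R, measurable A ->
    H A = (fine (\int[G]_(x in A) PhiS S x)%E / fine (\int[G]_x PhiS S x)%E)%:E.

(* Law of one observation |Z| in the end-truncation model with prior G:
   mu ~ G, |Z| | mu ~ |N(mu,1)|, observed conditionally on |Z| in S:
   P(|Z| in B) = P(|Z| in B /\ |Z| in S) / P(|Z| in S). *)
Definition end_trunc_law (S : set R) (G P : probability R R) : Prop :=
  forall B : set R, measurable B ->
    P B = (fine (\int[G]_x PhiS (B `&` S) x)%E / fine (\int[G]_x PhiS S x)%E)%:E.

(* Law of one observation |Z| in the per-unit truncation model with prior H: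
   mu ~ H, |Z| | mu has density phi^fold(z;mu) 1(z in S) / Phi(S;mu). *)
Definition per_unit_law (S : set R) (H P : probability R R) : Prop :=
  forall B : set R, measurable B ->
    P B = (\int[H]_x (fine (PhiS (B `&` S) x) / fine (PhiS S x))%:E)%E.

(* Iterated integral w.r.t. the n-fold product P^{(x) n}; the observation
   vector (|Z_1|,...,|Z_n|) is represented by the list [:: z_1; ...; z_n]. *)
Fixpoint iid_int (P : probability R R) (n : nat) (f : seq R -> \bar R) : \bar R :=
  match n with
  | 0 => f [::]
  | n'.+1 => (\int[P]_x iid_int P n' (fun s => f (x :: s)))%E
  end.

Definition iid_prob (P : probability R R) (n : nat) (E : set (seq R)) : \bar R :=
  iid_int P n (fun s => (\1_E s)%:E).

End Defs.

(* Main.v *)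
Require Import Defs.
From HB Require Import structures.
From mathcomp Require Import all_boot all_order all_algebra.
From mathcomp Require Import all_classical all_reals all_analysis.
From mathcomp Require Import measurable_realfun.
Import Order.TTheory GRing.Theory Num.Theory.
Local Open Scope classical_set_scope.
Local Open Scope ring_scope.

Section cov.
Local Open Scope ereal_scope.
Context d (T : measurableType d) (R : realType).
Variables (mu nu : {measure set T -> \bar R}) (k : T -> R).
Hypotheses (mk : measurable_fun setT k) (k0 : forall x, (0 <= k x)%R)
  (numu : forall A, measurable A -> nu A = \int[mu]_(x in A) (k x)%:E).

Import HBNNSimple.

Lemma cov_ge0 (f : T -> \bar R) : (forall x, 0 <= f x) -> measurable_fun setT f ->
  \int[nu]_x f x = \int[mu]_x (f x * (k x)%:E).
Proof.
move=> f0 mf; set g := fun x => (k x)%:E.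
have mg : measurable_fun setT g by exact/measurable_EFinP.
have g0 x : 0 <= g x by rewrite lee_fin.
pose h := nnsfun_approx measurableT mf.
have -> : \int[nu]_x f x =
    lim (\int[nu]_x (EFin \o h n) x @[n --> \oo]).
  have fE x : f x = lim ((EFin \o h n) x @[n --> \oo]).
    by apply/esym/cvg_lim => //; exact: cvg_nnsfun_approx.
  under eq_integral => x _ do rewrite fE.
  apply: monotone_convergence => //.
  - move=> n; apply/measurable_EFinP.
    by apply: (measurable_funS measurableT) => //; exact/measurable_funP.
  - by move=> n x _ //=; rewrite lee_fin.
  - by move=> x _ a b ab; rewrite lee_fin; exact/lefP/nd_nnsfun_approx.
have -> : \int[mu]_x (f x * g x) =
    lim (\int[mu]_x ((EFin \o h n) \* g) x @[n --> \oo]).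
  have fg x : f x * g x = lim (((EFin \o h n) \* g) x @[n --> \oo]).
    by apply/esym/cvg_lim => //; apply: cvgeZr => //; exact: cvg_nnsfun_approx.
  under eq_integral => x _ do rewrite fg.
  apply: monotone_convergence => [//| | |].
  - by move=> n; apply/emeasurable_funM => //; exact/measurable_EFinP.
  - by move=> n x _ /=; rewrite mule_ge0 ?lee_fin.
  - by move=> x _ a b ab/=; rewrite lee_wpmul2r ?lee_fin//; exact/lefP/nd_nnsfun_approx.
suff suf n : \int[mu]_x (((EFin \o h n) \* g) x) =
    \int[nu]_x (EFin \o h n) x.
  by congr (limn _); apply/funext => n; rewrite suf.
transitivity (\int[nu]_x
   (\sum_(y \in range (h n)) (y * \1_(h n @^-1` [set y]) x)%:E)); last first.
  by apply: eq_integral => t tE; rewrite /= fimfunE -fsumEFin.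
have indich m r : measurable_fun setT (fun x => (r * \1_(h m @^-1` [set r]) x)%:E).
  by apply: (measurable_comp measurableT) => //; exact: measurable_funM.
rewrite ge0_integral_fsum//; last by move=> m y Ey; exact: nnfun_muleindic_ge0.
transitivity (\int[mu]_x (\sum_(y \in range (h n))
    (y * \1_(h n @^-1` [set y]) x)%:E * g x)).
  under [RHS]eq_integral => x xE.
    rewrite -ge0_mule_fsuml => [|y]; last exact: nnfun_muleindic_ge0.
    rewrite fsumEFin // -(fimfunE _ x); over.
  by [].
rewrite ge0_integral_fsum//; last 2 first.
  - by move=> y; apply: emeasurable_funM => //.
  - by move=> m y Ey; rewrite mule_ge0 ?nnfun_muleindic_ge0.
apply: eq_fsbigr => r rhn.
under [RHS]eq_integral do rewrite EFinM.
rewrite integralZl_indic_nnsfun => //.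
under eq_integral do rewrite EFinM -muleA.
rewrite ge0_integralZl//.
- under eq_integral do rewrite muleC.
  rewrite (eq_integral (g \_ (h n @^-1` [set r]))); last first.
    by move=> x xE; rewrite epatch_indic.
  by rewrite -integral_mkcondr setTI -numu// integral_indic// setIT.
- apply: emeasurable_funM; first exact/measurable_EFinP.
  exact: mg.
- by move=> t Et; rewrite mule_ge0 ?lee_fin.
- by move: rhn; rewrite inE => -[t _ <-]; rewrite lee_fin.
Qed.

Lemma cov (f : T -> \bar R) : measurable_fun setT f ->
  \int[nu]_x f x = \int[mu]_x (f x * (k x)%:E).
Proof.
move=> mf; rewrite integralE [RHS]integralE.
have -> : (fun x => f x * (k x)%:E)^\+ = (fun x => f^\+ x * (k x)%:E).
  apply/funext => x; rewrite !funeposE maxe_pMl ?lee_fin // mul0e //.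
have -> : (fun x => f x * (k x)%:E)^\- = (fun x => f^\- x * (k x)%:E).
  apply/funext => x; rewrite !funenegE maxe_pMl ?lee_fin // mul0e mulNe //.
rewrite cov_ge0 //; last exact: measurable_funepos.
by rewrite cov_ge0 //; last exact: measurable_funeneg.
Qed.
End cov.

Lemma measurable_inv (R : realType) : measurable_fun [set: R] GRing.inv.
Proof.
have c0 : closed [set (0:R^o)].
  by apply: compact_closed; [exact: Rhausdorff | exact: compact_set1].
have -> : [set: R] = ~` [set 0] `|` [set 0] by rewrite setUC setUv.
apply/measurable_funU => //.
  by apply: measurableC; exact: closed_measurable.
split.
  apply: open_continuous_measurable_fun; first exact: closed_openC.
  by move=> x; rewrite inE => /eqP x0; exact: inv_continuous.
move=> _ B mB; have [B0|B0] := pselect (B (0:R)^-1).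
  rewrite (_ : _ `&` _ = [set 0]) //; apply/seteqP; split => [x [] //|x /= ->].
  by split.
rewrite (_ : _ `&` _ = set0) //; apply/seteqP; split => [x [/= ->] //|x //].
Qed.

Section S.
Context {R : realType}.

Lemma phiE (mu z : R) : phi mu z = normal_peak 1 * normal_fun mu 1 z.
Proof. by rewrite /phi normal_pdfE ?oner_neq0. Qed.

Lemma measurable_phi2 : measurable_fun [set: R * R]
  (fun p : R * R => phi p.1 p.2).
Proof.
rewrite (_ : (fun p : R * R => phi p.1 p.2) = (fun p => normal_peak 1 * normal_fun p.1 1 p.2)); last first.
  by apply/funext => p; rewrite phiE.
apply: measurable_funM => //.
rewrite /normal_fun.
apply: measurableT_comp; first exact: measurable_expR.
apply: measurable_funM => //=.
apply: measurableT_comp => //.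
apply: measurable_funX.
apply: measurable_funB.
  exact: measurable_snd.
exact: measurable_fst.
Qed.

Lemma measurable_phifold2 : measurable_fun [set: R * R]
  (fun p : R * R => phi_fold p.1 p.2).
Proof.
apply: measurable_funD; first exact: measurable_phi2.
have -> : (fun p : R * R => phi p.1 (- p.2)) =
  (fun p : R * R => phi p.1 p.2) \o (fun p : R * R => (p.1, - p.2)) by [].
apply: measurableT_comp; first exact: measurable_phi2.
apply: measurable_fun_pair; first exact: measurable_fst.
apply: measurableT_comp => //; exact: measurable_snd.
Qed.

Lemma measurable_phiS (A : set R) : measurable A -> measurable_fun [set: R] (PhiS A).
Proof.
move=> mA.
have -> : PhiS A = fubini_F (@lebesgue_measure R)
   (fun p : R * R => (phi_fold p.1 p.2 * \1_A p.2)%:E).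
  apply/funext => x; rewrite /PhiS /fubini_F [LHS]integral_mkcond /=.
  by apply: eq_integral => z _; rewrite /patch /= /indic; case: (z \in A); rewrite /= ?mulr1 ?mulr0.
apply: measurable_fun_fubini_tonelli_F.
  apply/measurable_EFinP; apply: measurable_funM; first exact: measurable_phifold2.
  apply: measurableT_comp; first exact: measurable_indic.
  exact: measurable_snd.
move=> p; rewrite lee_fin mulr_ge0 ?addr_ge0 ?normal_pdf_ge0 // /indic.
Qed.

Lemma phiN (mu z : R) : phi mu (- z) = phi (- mu) z.
Proof. by rewrite !phiE /normal_fun -opprD sqrrN opprK. Qed.

Lemma phi_gt0 (mu z : R) : 0 < phi mu z.
Proof. by rewrite phiE mulr_gt0 ?normal_peak_gt0 ?oner_neq0 // expR_gt0. Qed.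

Lemma phi_fold_gt0 (mu z : R) : 0 < phi_fold mu z.
Proof. by rewrite /phi_fold addr_gt0 // phi_gt0. Qed.

Lemma measurable_phi_fold (mu : R) : measurable_fun [set: R] (fun z => (phi_fold mu z)%:E).
Proof.
apply/measurable_EFinP.
have -> : phi_fold mu = (phi mu) \+ (phi (- mu)).
  by apply/funext => z; rewrite /phi_fold phiN.
by apply: measurable_funD; exact: measurable_normal_pdf.
Qed.

Lemma PhiS_ge0 (A : set R) (mu : R) : (0 <= PhiS A mu)%E.
Proof. by apply: integral_ge0 => z _; rewrite lee_fin ltW // phi_fold_gt0. Qed.

Lemma PhiS_le (A B : set R) (mu : R) : measurable A -> measurable B -> A `<=` B -> (PhiS A mu <= PhiS B mu)%E.
Proof.
move=> mA mB AB; apply: ge0_subset_integral => //.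
  exact: measurable_funTS (measurable_phi_fold mu).
by move=> z _; rewrite lee_fin ltW // phi_fold_gt0.
Qed.

Lemma PhiS_le2 (A : set R) (mu : R) : measurable A -> (PhiS A mu <= 2%:E)%E.
Proof.
move=> mA; apply: (le_trans (@PhiS_le A setT mu mA measurableT (subsetT A))).
rewrite /PhiS /phi_fold.
under eq_integral do rewrite EFinD phiN.
rewrite ge0_integralD //; last 4 first.
- by move=> z _; rewrite lee_fin normal_pdf_ge0.
- by apply/measurable_EFinP; exact: measurable_normal_pdf.
- by move=> z _; rewrite lee_fin normal_pdf_ge0.
- by apply/measurable_EFinP; exact: measurable_normal_pdf.
by rewrite /phi !integral_normal_pdf.
Qed.

Lemma PhiS_fin (A : set R) (mu : R) : measurable A -> PhiS A mu \is a fin_num.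
Proof.
move=> mA; rewrite ge0_fin_numE ?PhiS_ge0 //.
exact: le_lt_trans (@PhiS_le2 A mu mA) (ltry 2).
Qed.

Lemma PhiS_gt0 (S : set R) (mu : R) : measurable S ->
  (0 < (@lebesgue_measure R) S)%E -> (0 < PhiS S mu)%E.
Proof.
move=> mS S0; rewrite lt_neqAle PhiS_ge0 andbT; apply/negP => /eqP H0.
have : (\int[@lebesgue_measure R]_(z in S) `|(phi_fold mu z)%:E|)%E = 0%E.
  rewrite [RHS]H0 /PhiS; apply: eq_integral => z _.
  by rewrite gee0_abs // lee_fin ltW // phi_fold_gt0.
have [] := @ae_eq_integral_abs _ _ _ (@lebesgue_measure R) S mS (fun z => (phi_fold mu z)%:E).
  apply: measurable_funTS; exact: measurable_phi_fold.
move=> H1 _ /H1 [N [mN N0 sub]].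

have SN : S `<=` N.
  move=> z Sz; apply: sub => /= /(_ Sz) /eqP.
  by rewrite /cst eqe gt_eqF // phi_fold_gt0.
have := @le_measure _ _ _ (@lebesgue_measure R) S N.
rewrite !inE => /(_ mS mN SN) h; have := lt_le_trans S0 h.
by rewrite [X in (_ < X)%E]N0 ltxx.
Qed.

Lemma measurable_finePhiS (A : set R) : measurable A ->
  measurable_fun [set: R] (fun x => fine (PhiS A x)).
Proof.
move=> mA; apply/measurable_EFinP.
have -> : (EFin \o (fun x => fine (PhiS A x))) = PhiS A.
  by apply/funext => x /=; rewrite fineK // PhiS_fin.
exact: measurable_phiS.
Qed.

Lemma intPhi_fin (G : probability R R) (A B : set R) : measurable A -> measurable B ->
  (\int[G]_(x in B) PhiS A x)%E \is a fin_num.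
Proof.
move=> mA mB; rewrite ge0_fin_numE; last by apply: integral_ge0 => x _; exact: PhiS_ge0.
apply: (@le_lt_trans _ _ (\int[G]_(x in B) (cst 2%:E) x)%E).
  apply: ge0_le_integral => //.
  - by move=> x _; exact: PhiS_ge0.
  - apply: measurable_funTS; exact: (measurable_phiS _ mA).
  - by move=> x _; exact: PhiS_le2.
rewrite integral_cst //.
apply: (@le_lt_trans _ _ (2%:E * 1)%E); last by rewrite mule1 ltry.
by rewrite lee_pmul2l ?lte_fin // probability_le1.
Qed.

Lemma iid_eq (P Q : probability R R) : (forall A, measurable A -> P A = Q A) ->
  forall n f, iid_int P n f = iid_int Q n f.
Proof.
move=> PQ; elim => [//|n IH] f /=.
under eq_integral do rewrite IH.
by apply: (eq_measure_integral Q) => A mA _; exact: PQ.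
Qed.
End S.

Theorem theorem3 (R : realType) (S : set R)
  (mS : measurable S) (S_nneg : S `<=` [set x | 0 <= x])
  (S_pos : (0 < (@lebesgue_measure R) S)%E)
  (G : probability R R) (nu delta : R -> R)
  (int_nu : G.-integrable setT (fun x => (nu x)%:E))
  (int_delta : G.-integrable setT (fun x => (delta x)%:E))
  (delta_ne0 : (\int[G]_x (delta x)%:E)%E != 0%E)
  (n : nat) (I : seq R -> interval R)
  (H : probability R R) (HH : is_tilt S G H)
  (PA PB : probability R R)
  (HA : end_trunc_law S G PA) (HB : per_unit_law S H PB) :
  iid_prob PA n [set s | ratioT G nu delta \in I s] =
  iid_prob PB n [set s | tiltT S H nu delta \in I s].
Proof.
pose g x := fine (PhiS S x).
have PhiE x : PhiS S x = (g x)%:E by rewrite /g fineK // PhiS_fin.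
have g0 x : 0 < g x by rewrite -lte_fin -PhiE PhiS_gt0.
have mg : measurable_fun setT g by exact: measurable_finePhiS.
pose c := fine (\int[G]_x PhiS S x)%E.
have c0 : 0 < c.
  rewrite lt_neqAle fine_ge0 ?andbT; last by apply: integral_ge0 => x _; exact: PhiS_ge0.
  apply/eqP => c0; have := HH setT measurableT; rewrite probability_setT -/c -c0.
  by rewrite invr0 mulr0 => /eqP; rewrite eqe oner_eq0.
pose k x := g x / c.
have k0 x : 0 <= k x by rewrite /k divr_ge0 // ltW.
have mk : measurable_fun setT k.
  by apply: measurable_funM => //; exact: measurable_cst.
have numu A : measurable A -> H A = (\int[G]_(x in A) (k x)%:E)%E.
  move=> mA; rewrite HH //.
  have -> : (\int[G]_(x in A) (k x)%:E = (c^-1)%:E * \int[G]_(x in A) PhiS S x)%E.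
    rewrite -ge0_integralZl //.
    - by apply: eq_integral => x _; rewrite PhiE -EFinM /k mulrC.
    - by apply: measurable_funTS; exact: measurable_phiS.
    - by move=> x _; exact: PhiS_ge0.
    - by rewrite lee_fin invr_ge0 ltW.
  by rewrite -[X in (_ * X)%E](fineK (@intPhi_fin R G S A mS mA)) -EFinM mulrC.
have key f : G.-integrable setT (fun x => (f x)%:E) ->
    fine (\int[H]_x (f x / g x)%:E)%E = fine (\int[G]_x (f x)%:E)%E / c.
  move=> intf.
  rewrite (@cov _ _ _ G H k mk k0 numu); last first.
    apply/measurable_EFinP; apply: measurable_funM.
      by apply/measurable_EFinP; exact: measurable_int intf.
    exact: measurableT_comp (@measurable_inv R) mg.
  under eq_integral => x _.
    rewrite -EFinM (_ : f x / g x * k x = c^-1 * f x); last first.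
      by rewrite /k mulrA divfK ?gt_eqF // mulrC.
    rewrite EFinM; over.
  rewrite integralZl //.
  rewrite -[X in (_ * X)%E](fineK (integrable_fin_num measurableT intf)) -EFinM /=.
  by rewrite mulrC.
have Heq : ratioT G nu delta = tiltT S H nu delta.
  rewrite /tiltT -/g key // key // /ratioT.
  by rewrite invfM invrK mulrACA mulVf ?gt_eqF // mulr1.
rewrite Heq /iid_prob; apply: iid_eq => B mB.
rewrite HA // HB // -/c.
rewrite (@cov _ _ _ G H k mk k0 numu); last first.
  apply/measurable_EFinP; apply: measurable_funM.
    by apply: measurable_finePhiS; exact: measurableI.
  exact: measurableT_comp (@measurable_inv R) mg.
under eq_integral => x _.
  rewrite -/(g x) -EFinM (_ : fine (PhiS (B `&` S) x) / g x * k x = c^-1 * fine (PhiS (B `&` S) x)); last first.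
    by rewrite /k mulrA divfK ?gt_eqF // mulrC.
  rewrite EFinM; over.
rewrite ge0_integralZl //; last 3 first.
- apply/measurable_EFinP; apply: measurable_finePhiS; exact: measurableI.
- by move=> x _; rewrite lee_fin fine_ge0 // PhiS_ge0.
- by rewrite lee_fin invr_ge0 ltW.
have -> : (\int[G]_x (fine (PhiS (B `&` S) x))%:E = \int[G]_x PhiS (B `&` S) x)%E.
  by apply: eq_integral => x _; rewrite fineK // PhiS_fin //; exact: measurableI.
rewrite -[X in (_ * X)%E](fineK (@intPhi_fin R G (B `&` S) setT (measurableI _ _ mB mS) measurableT)).
by rewrite -EFinM mulrC.
Qed.
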